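(* Let $X$ be a CAT(0) space, $T_n:X\to X$ for $n\in\mathbb{N}$, and $(\gamma_n)$ a sequence of positive reals such that $(T_n)$ is jointly $(P_2)$ with respect to $(\gamma_n)$. Then for all $m,n\in\mathbb{N}$ and all $w\in X$, $d(T_nw,T_mw)\le\frac{|\gamma_n-\gamma_m|}{\gamma_n}d(w,T_nw)$.
   Context: A geodesic space $(X,d)$ is CAT(0) if for all $z\in X$, all geodesics $\gamma:[a,b]\to X$ and all $t\in[0,1]$, $d^2(z,\gamma((1-t)a+tb))\le(1-t)d^2(z,\gamma(a))+td^2(z,\gamma(b))-t(1-t)d^2(\gamma(a),\gamma(b))$. The family $(T_n)$ is jointly $(P_2)$ with respect to $(\gamma_n)$ if for all $n,m\in\mathbb{N}$ and $x,y\in X$, $\frac1{\gamma_m}\big(d^2(T_nx,T_my)+d^2(y,T_my)-d^2(y,T_nx)\big)\le\frac1{\gamma_n}\big(d^2(x,T_my)-d^2(x,T_nx)-d^2(T_nx,T_my)\big)$. *)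

(* Defs.v *)
From Stdlib Require Import Reals.
Open Scope R_scope.

Definition is_metric {X : Type} (d : X -> X -> R) : Prop :=
  (forall x y, 0 <= d x y) /\
  (forall x y, d x y = 0 <-> x = y) /\
  (forall x y, d x y = d y x) /\
  (forall x y z, d x z <= d x y + d y z).

(* g : [a,b] -> X is a geodesic (isometric embedding of the interval [a,b]).
   Represented as a total function R -> X, only its values on [a,b] matter. *)
Definition is_geodesic {X : Type} (d : X -> X -> R) (a b : R) (g : R -> X) : Prop :=
  a <= b /\
  forall s t, a <= s <= b -> a <= t <= b -> d (g s) (g t) = Rabs (s - t).

Definition geodesic_space {X : Type} (d : X -> X -> R) : Prop :=
  is_metric d /\
  forall x y, exists g : R -> X,
    is_geodesic d 0 (d x y) g /\ g 0 = x /\ g (d x y) = y.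

Definition CAT0 {X : Type} (d : X -> X -> R) : Prop :=
  geodesic_space d /\
  forall (z : X) (a b : R) (g : R -> X) (t : R),
    is_geodesic d a b g -> 0 <= t <= 1 ->
    (d z (g ((1 - t) * a + t * b)))^2 <=
      (1 - t) * (d z (g a))^2 + t * (d z (g b))^2
      - t * (1 - t) * (d (g a) (g b))^2.

Definition jointly_P2 {X : Type} (d : X -> X -> R)
    (T : nat -> X -> X) (gamma : nat -> R) : Prop :=
  forall (n m : nat) (x y : X),
    / gamma m * ((d (T n x) (T m y))^2 + (d y (T m y))^2 - (d y (T n x))^2)
    <= / gamma n * ((d x (T m y))^2 - (d x (T n x))^2 - (d (T n x) (T m y))^2).

(* Main.v *)
Require Import Defs.
From Stdlib Require Import Reals Lra Psatz.
Open Scope R_scope.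

Theorem proposition3p10 (X : Type) (d : X -> X -> R) (T : nat -> X -> X)
    (gamma : nat -> R) :
  CAT0 d ->
  (forall n, 0 < gamma n) ->
  jointly_P2 d T gamma ->
  forall (m n : nat) (w : X),
    d (T n w) (T m w) <= Rabs (gamma n - gamma m) / gamma n * d w (T n w).
Proof.
  intros [[[Hpos [Hsep [Hsym Htri]]] _] _] Hg HP m n w.
  pose proof (HP n m w w) as H.
  set (a := d w (T n w)) in *.
  set (b := d w (T m w)) in *.
  set (c := d (T n w) (T m w)) in *.
  assert (Ha : 0 <= a) by apply Hpos.
  assert (Hb : 0 <= b) by apply Hpos.
  assert (Hc : 0 <= c) by apply Hpos.
  assert (T1 : b <= a + c) by (unfold a, b, c; apply Htri).
  assert (T2 : a <= b + c).
  { unfold a, b, c. rewrite (Hsym (T n w) (T m w)). apply Htri. }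
  pose proof (Hg n) as gn. pose proof (Hg m) as gm.
  set (p := gamma n) in *. set (q := gamma m) in *.
  assert (K : p * (c^2 + b^2 - a^2) <= q * (b^2 - a^2 - c^2)).
  { apply Rmult_le_compat_l with (r := p * q) in H; [|nra].
    replace (p * q * (/ q * (c ^ 2 + b ^ 2 - a ^ 2))) with (p * (c^2 + b^2 - a^2)) in H
      by (field; lra).
    replace (p * q * (/ p * (b ^ 2 - a ^ 2 - c ^ 2))) with (q * (b^2 - a^2 - c^2)) in H
      by (field; lra).
    exact H. }
  assert (Main : p * c <= Rabs (p - q) * a).
  { destruct (Rle_dec p q) as [Hpq|Hpq].
    - rewrite Rabs_left1 by lra.
      assert (E : b^2 - a^2 <= 2*a*c + c^2) by nra.
      assert (F : p * c * c <= (q - p) * a * c) by nra.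
      destruct (Req_dec c 0) as [->|Hc0]; [nra|].
      apply Rmult_le_reg_r with c; lra.
    - rewrite Rabs_right by lra.
      assert (F : p * c * c <= (p - q) * a * c).
      { destruct (Rle_dec c a).
        + assert (E : a^2 - b^2 <= 2*a*c - c^2) by nra. nra.
        + exfalso. assert (a^2 < c^2) by nra. assert (0 < q*c^2) by nra. nra. }
      destruct (Req_dec c 0) as [->|Hc0]; [nra|].
      apply Rmult_le_reg_r with c; lra. }
  unfold Rdiv.
  apply Rmult_le_reg_l with p; [lra|].
  replace (p * (Rabs (p - q) * / p * a)) with (Rabs (p - q) * a) by (field; lra).
  exact Main.
Qed.
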